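(* Let $f:\mathbb{Z}\to\mathbb{R}^{+}$ be a function such that $\|f'\|_{\infty}<\infty$ and $\widetilde{M}f$ is not identically $+\infty$. Then $\widetilde{M}f(n)<\infty$ for all $n\in\mathbb{Z}$.
   Context: For $f:\mathbb{Z}\to\mathbb{R}$, the uncentered discrete Hardy–Littlewood maximal function is $\widetilde{M}f(n)=\sup_{r,s\in\mathbb{Z}_{\ge 0}}\frac{1}{r+s+1}\sum_{k=-s}^{r}|f(n+k)|$ (possibly $+\infty$). For $g:\mathbb{Z}\to\mathbb{R}$, $g'(n)=g(n+1)-g(n)$ and $\|g\|_\infty=\sup_{n\in\mathbb{Z}}|g(n)|$. *)

(* Defs.v *)
From Stdlib Require Import Reals ZArith Lra Lia.
Open Scope R_scope.

(* sum_{k=-s}^{r} |f(n+k)|  (r, s >= 0), as a sum over j = 0 .. r+s of |f(n - s + j)| *)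
Definition window_sum (f : Z -> R) (n : Z) (r s : nat) : R :=
  sum_f_R0 (fun j => Rabs (f (n - Z.of_nat s + Z.of_nat j)%Z)) (r + s).

Definition window_avg (f : Z -> R) (n : Z) (r s : nat) : R :=
  window_sum f n r s / INR (r + s + 1).

(* \widetilde{M} f (n) < +oo : the supremum over r,s >= 0 of the averages is finite,
   i.e. the set of averages is bounded above. *)
Definition unc_maximal_finite (f : Z -> R) (n : Z) : Prop :=
  exists B : R, forall r s : nat, window_avg f n r s <= B.

Definition dderiv (g : Z -> R) (n : Z) : R := g (n + 1)%Z - g n.

Definition bounded_Z (g : Z -> R) : Prop :=
  exists C : R, forall n : Z, Rabs (g n) <= C.

(* Main.v *)
Require Import Defs.
From Stdlib Require Import Reals ZArith.
From Stdlib Require Import Lra Lia.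
Open Scope R_scope.

Lemma sumA (h : nat -> R) (N m : nat) : (forall i, 0 <= h i) ->
  sum_f_R0 h N <= sum_f_R0 h (N + m).
Proof.
  intro H; induction m as [|m IH].
  - rewrite Nat.add_0_r; lra.
  - replace (N + S m)%nat with (S (N + m)) by lia. simpl. specialize (H (S (N+m))). lra.
Qed.

Lemma sumB (k : nat) : forall (h : nat -> R) (N : nat), (forall i, 0 <= h i) ->
  sum_f_R0 (fun j => h (j + k)%nat) N <= sum_f_R0 h (N + k).
Proof.
  induction k as [|k IH]; intros h N H.
  - rewrite Nat.add_0_r. rewrite (sum_eq _ h); [lra|]. intros; f_equal; lia.
  - rewrite (sum_eq _ (fun j => (fun i => h (S i)) (j + k)%nat)).
    2:{ intros; simpl; f_equal; lia. }
    eapply Rle_trans. apply (IH (fun i => h (S i))). intros; apply H.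
    replace (N + S k)%nat with (S (N + k)) by lia.
    rewrite (decomp_sum h (S (N+k))) by lia. simpl pred. specialize (H 0%nat). lra.
Qed.

Theorem lemma5p3 (f : Z -> R)
  (hpos : forall n : Z, 0 < f n)
  (hderiv : bounded_Z (dderiv f))
  (hnotinf : exists n0 : Z, unc_maximal_finite f n0) :
  forall n : Z, unc_maximal_finite f n.
Proof.
  intro n. destruct hnotinf as [n0 [B HB]].
  set (d := Z.to_nat (Z.abs (n - n0))).
  assert (HB0 : 0 <= B).
  { eapply Rle_trans; [|apply (HB 0%nat 0%nat)]. unfold window_avg, window_sum.
    apply Rmult_le_pos. apply cond_pos_sum. intros; apply Rabs_pos.
    left; apply Rinv_0_lt_compat, lt_0_INR; lia. }
  exists (B * INR (2 * d + 1)). intros r s.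
  set (g := fun m => Rabs (f m)).
  set (a' := (n0 - Z.of_nat (s + d))%Z).
  set (k := Z.to_nat (n - Z.of_nat s - a')).
  assert (Hk : (Z.of_nat k = n - Z.of_nat s - a')%Z).
  { unfold k, a'. rewrite Z2Nat.id; unfold d; [lia|]. lia. }
  assert (Hk2 : (k <= 2 * d)%nat).
  { unfold d in *. lia. }
  assert (Hsum : window_sum f n r s <= window_sum f n0 (r + d) (s + d)).
  { unfold window_sum.
    rewrite (sum_eq _ (fun j => (fun i => Rabs (f (a' + Z.of_nat i)%Z)) (j + k)%nat)).
    2:{ intros i _. simpl. f_equal. f_equal. rewrite Nat2Z.inj_add. lia. }
    eapply Rle_trans. apply (sumB k (fun i => Rabs (f (a' + Z.of_nat i)%Z))). intros; apply Rabs_pos.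
    replace (r + d + (s + d))%nat with ((r + s + k) + (2*d - k))%nat by lia.
    eapply Rle_trans. apply sumA. intros; apply Rabs_pos.
    right. apply sum_eq. intros; unfold a'; reflexivity. }
  assert (Hw := HB (r + d)%nat (s + d)%nat). unfold window_avg in *.
  assert (Hpos : 0 < INR (r + s + 1)) by (apply lt_0_INR; lia).
  assert (Hpos' : 0 < INR (r + d + (s + d) + 1)) by (apply lt_0_INR; lia).
  set (S1 := window_sum f n r s) in *.
  set (S2 := window_sum f n0 (r + d) (s + d)) in *.
  set (L1 := INR (r + s + 1)) in *.
  set (L2 := INR (r + d + (s + d) + 1)) in *.
  assert (Hw' : S2 <= B * L2).
  { replace S2 with (S2 / L2 * L2) by (field; lra). apply Rmult_le_compat_r; lra. }
  apply (Rmult_le_reg_r L1); [exact Hpos|].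
  replace (S1 / L1 * L1) with S1 by (field; lra).
  assert (Hle : INR (r + d + (s + d) + 1) <= INR (2 * d + 1) * INR (r + s + 1)).
  { rewrite <- mult_INR. apply le_INR. nia. }
  assert (B * INR (r + d + (s + d) + 1) <= B * (INR (2 * d + 1) * INR (r + s + 1))).
  { apply Rmult_le_compat_l; assumption. }
  fold L1 L2 in H. rewrite Rmult_assoc. lra.
Qed.
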